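(* Let $P$ be a CHR program that is range-restricted and ground confluent. Then $P$ is consistent: the first-order theory consisting of $\mathcal{CT}$ together with the logical reading of $P$ has a model (in particular, it does not imply $\mathtt{False}$).
   Context: Terms are variables or $F~t_1\ldots t_n$ for function symbols $F$. Built-in constraints are $\mathtt{True}$, $\mathtt{False}$ and $t=s$; user constraints are $C~t_1\ldots t_n$ for user predicate symbols $C$; constraints are built-in or user constraints. $\mathcal{CT}$ is the theory of syntactic equality of terms. There are three disjoint infinite sets of variables $\mathsf{ProgVars}$, $\mathsf{GlobalVars}$, $\mathsf{LocalVars}$; let $\mathsf{StateVars}=\mathsf{GlobalVars}\cup\mathsf{LocalVars}$. A CHR program is a finite set of rules, each a simplification $H \Leftrightarrow B$ or a propagation $H \Rightarrow B$, where $H$ is a nonempty multiset of user constraints over $\mathsf{ProgVars}$ and $B$ a multiset of constraints over $\mathsf{ProgVars}$; the local variables of a rule are those in $B$ but not in $H$. The logical reading of a simplification is $\forall(\bigwedge H \leftrightarrow \exists \bar y\, \bigwedge B)$ and of a propagation $\forall(\bigwedge H \rightarrow \exists \bar y\, \bigwedge B)$, where $\bar y$ are the local variables; the logical reading of $P$ is the conjunction of these. A state is a multiset of constraints over $\mathsf{StateVars}$, taken modulo the equivalence $S_1\equiv S_2$ iff $\mathcal{CT}\models (\exists_{\mathsf{LocalVars}}: \mathrm{user}(S_1)=\mathrm{user}(S_2)\wedge S_1)\leftrightarrow(\exists_{\mathsf{LocalVars}}: \mathrm{user}(S_1)=\mathrm{user}(S_2)\wedge S_2)$, where $\mathrm{user}(S)$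 is the multiset of user constraints of $S$; $\mathtt{False}$ denotes the state $\{\mathtt{False}\}$ and $\mathtt{True}$ the state $\{\mathtt{True}\}$. For a substitution $\theta$ and object $X$, $\theta.X$ is $\theta$ applied to $X$; $\uplus$ is multiset union. The derivation relation $\rightarrowtail$ of $P$ is the least relation with: (simplification) if $(H\Leftrightarrow B)\in P$, $\mathcal{CT}\models S\rightarrow(\theta.H=C)$ and $\mathcal{CT}\models\exists(C\wedge S)$, then $C\uplus S\rightarrowtail \theta.B\uplus S$; (propagation) if $(H\Rightarrow B)\in P$, $\mathcal{CT}\models S\rightarrow(\theta.H=C)$, $\mathcal{CT}\models\exists(C\wedge S)$ and $C\uplus S\neq \theta.B\uplus C\uplus S$ as states, then $C\uplus S\rightarrowtail \theta.B\uplus C\uplus S$; here $\theta$ maps the variables of $H$ to terms over the variables of $C$ and the local variables of the rule to fresh variables of $\mathsf{LocalVars}$ not occurring in $C,S$. $\rightarrowtail^*$ is the reflexive–transitive closure. Two states $S_1,S_2$ are joinable if $S_1\rightarrowtail^* S'$ and $S_2\rightarrowtail^* S'$ for some $S'$. A state is ground if it is represented by a multiset of constraints containing no variables. $P$ is range-restricted if whenever $S$ is ground and $S\rightarrowtail S'$, then $S'$ is ground. $P$ is ground confluent if for every ground state $S$ and all $S_1,S_2$ with $S\rightarrowtail^* S_1$, $S\rightarrowtail^* S_2$, the states $S_1,S_2$ are joinable. *)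

(* Defs.v *)
From Stdlib Require Import List Permutation Relations.
Import ListNotations.
Set Implicit Arguments.

Inductive var : Type :=
| PV (n : nat)
| GV (n : nat)
| LV (n : nat).

Definition is_prog_var (x : var) : Prop := match x with PV _ => True | _ => False end.
Definition is_local_var (x : var) : Prop := match x with LV _ => True | _ => False end.

Section CHR.
(* Fsym : function symbols, Psym : user predicate (constraint) symbols.
   Symbols carry no fixed arity: F t1 .. tn may be formed for any n. *)
Variables Fsym Psym : Type.

Inductive term : Type :=
| Var (x : var)
| Fn (f : Fsym) (args : list term).

Inductive constraint : Type :=
| CTrue
| CFalse
| CEq (t s : term)
| CUser (c : Psym) (args : list term).

Fixpoint tvars (t : term) : list var :=
  match t with
  | Var x => [x]
  | Fn _ ts => flat_map tvars ts
  end.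

Definition cvars (c : constraint) : list var :=
  match c with
  | CTrue | CFalse => []
  | CEq t s => tvars t ++ tvars s
  | CUser _ ts => flat_map tvars ts
  end.

(* A multiset of constraints is represented by a list (up to permutation). *)
Definition svars (S : list constraint) : list var := flat_map cvars S.

Definition user (S : list constraint) : list constraint :=
  filter (fun c => match c with CUser _ _ => true | _ => false end) S.

Record structure : Type := {
  dom   : Type;
  ifun  : Fsym -> list dom -> dom;
  ipred : Psym -> list dom -> Prop }.

Fixpoint eval (M : structure) (v : var -> dom M) (t : term) : dom M :=
  match t with
  | Var x => v x
  | Fn f ts => ifun M f (map (eval M v) ts)
  end.

(* CT: Clark's equality theory (syntactic equality of terms): equality is
   interpreted as identity; decomposition/injectivity, clash (distinct symbols
   or distinct numbers of arguments give distinct values) and acyclicity. *)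
Definition CT_model (M : structure) : Prop :=
  (forall f g (l1 l2 : list (dom M)), ifun M f l1 = ifun M g l2 -> f = g /\ l1 = l2) /\
  (forall (t : term) (x : var) (v : var -> dom M),
      In x (tvars t) -> t <> Var x -> eval M v t <> v x).

(* Built-in part of a state evaluated in a structure; in CT-formulas user
   constraints carry no information from CT. *)
Definition holds_builtin (M : structure) (v : var -> dom M) (c : constraint) : Prop :=
  match c with
  | CTrue => True
  | CFalse => False
  | CEq t s => eval M v t = eval M v s
  | CUser _ _ => True
  end.

Definition holds_b (M : structure) (v : var -> dom M) (S : list constraint) : Prop :=
  Forall (holds_builtin M v) S.

Definition ceq (M : structure) (v w : var -> dom M) (c d : constraint) : Prop :=
  match c, d with
  | CUser p a, CUser q b => p = q /\ map (eval M v) a = map (eval M w) b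
  | _, _ => False
  end.

Definition ueq (M : structure) (v w : var -> dom M) (l1 l2 : list constraint) : Prop :=
  exists l2', Permutation l2 l2' /\ Forall2 (ceq M v w) l1 l2'.

Definition is_state (S : list constraint) : Prop :=
  forall x, In x (svars S) -> ~ is_prog_var x.

(* State equivalence: local variables of each state are existentially
   quantified (separately), global variables are shared. *)
Definition equiv_dir (S1 S2 : list constraint) : Prop :=
  forall M : structure, CT_model M ->
  forall v : var -> dom M, holds_b M v S1 ->
    exists v' : var -> dom M,
      (forall x, ~ is_local_var x -> v' x = v x) /\
      ueq M v v' (user S1) (user S2) /\ holds_b M v' S2.

Definition state_equiv (S1 S2 : list constraint) : Prop :=
  equiv_dir S1 S2 /\ equiv_dir S2 S1.

Definition ground (S : list constraint) : Prop :=
  exists G, svars G = [] /\ state_equiv S G.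

Inductive rule_kind := Simplification | Propagation.

Record rule : Type := {
  kind : rule_kind;
  head : list (Psym * list term);
  body : list constraint }.

Definition program := list rule.

Definition head_constraints (r : rule) : list constraint :=
  map (fun a => CUser (fst a) (snd a)) (head r).

Definition head_vars (r : rule) : list var := svars (head_constraints r).

Definition local_vars (r : rule) : list var :=
  filter (fun x => negb (existsb (fun y =>
            match x, y with
            | PV n, PV m | GV n, GV m | LV n, LV m => Nat.eqb n m
            | _, _ => false end) (head_vars r))) (svars (body r)).

Definition wf_rule (r : rule) : Prop :=
  head r <> [] /\
  (forall x, In x (head_vars r) -> is_prog_var x) /\
  (forall x, In x (svars (body r)) -> is_prog_var x).

Definition wf_program (P : program) : Prop := Forall wf_rule P.

Fixpoint subst (th : var -> term) (t : term) : term :=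
  match t with
  | Var x => th x
  | Fn f ts => Fn f (map (subst th) ts)
  end.

Definition csubst (th : var -> term) (c : constraint) : constraint :=
  match c with
  | CTrue => CTrue
  | CFalse => CFalse
  | CEq t s => CEq (subst th t) (subst th s)
  | CUser p ts => CUser p (map (subst th) ts)
  end.

Definition ssubst (th : var -> term) (S : list constraint) := map (csubst th) S.

(* One derivation step on representatives: C ++ S >-> th.B ++ S (resp.
   th.B ++ C ++ S). *)
Definition raw_step (P : program) (S1 S2 : list constraint) : Prop :=
  exists (r : rule) (C S : list constraint) (th : var -> term),
    In r P /\ S1 = C ++ S /\ is_state S1 /\
    (forall x, In x (head_vars r) -> incl (tvars (th x)) (svars C)) /\
    (forall y, In y (local_vars r) ->
        exists z, is_local_var z /\ th y = Var z /\ ~ In z (svars (C ++ S))) /\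
    (forall y1 y2, In y1 (local_vars r) -> In y2 (local_vars r) ->
        th y1 = th y2 -> y1 = y2) /\
    (forall M : structure, CT_model M -> forall v : var -> dom M,
        holds_b M v S -> ueq M v v (ssubst th (head_constraints r)) C) /\
    (forall M : structure, CT_model M -> exists v : var -> dom M, holds_b M v (C ++ S)) /\
    match kind r with
    | Simplification => S2 = ssubst th (body r) ++ S
    | Propagation => S2 = ssubst th (body r) ++ C ++ S /\
                     ~ state_equiv (C ++ S) (ssubst th (body r) ++ C ++ S)
    end.

(* Derivation relation on states (equivalence classes). *)
Definition step (P : program) (S1 S2 : list constraint) : Prop :=
  exists R1 R2, state_equiv S1 R1 /\ state_equiv S2 R2 /\ raw_step P R1 R2.

Definition star (P : program) : list constraint -> list constraint -> Prop :=
  clos_refl_trans (list constraint) (fun a b => state_equiv a b \/ step P a b).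

Definition joinable (P : program) (S1 S2 : list constraint) : Prop :=
  exists S', star P S1 S' /\ star P S2 S'.

Definition range_restricted (P : program) : Prop :=
  forall S S', ground S -> step P S S' -> ground S'.

Definition ground_confluent (P : program) : Prop :=
  forall S S1 S2, ground S -> star P S S1 -> star P S S2 -> joinable P S1 S2.

Definition holds_c (M : structure) (v : var -> dom M) (c : constraint) : Prop :=
  match c with
  | CTrue => True
  | CFalse => False
  | CEq t s => eval M v t = eval M v s
  | CUser p ts => ipred M p (map (eval M v) ts)
  end.

Definition rule_holds (M : structure) (r : rule) : Prop :=
  forall v : var -> dom M,
    let H := Forall (holds_c M v) (head_constraints r) in
    let B := exists v' : var -> dom M,
               (forall x, ~ In x (local_vars r) -> v' x = v x) /\
               Forall (holds_c M v') (body r) in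
    match kind r with
    | Simplification => H <-> B
    | Propagation => H -> B
    end.

Definition consistent (P : program) : Prop :=
  exists M : structure, CT_model M /\ Forall (rule_holds M) P.

End CHR.

(* Main.v *)
Require Import Defs.
From Stdlib Require Import List Permutation Relations Lia Classical FunctionalExtensionality PropExtensionality.
From mathcomp Require classical_sets.
Import ListNotations.
Arguments Var {Fsym} x.
Arguments CTrue {Fsym Psym}.
Arguments CFalse {Fsym Psym}.
Arguments CEq {Fsym Psym} t s.


Lemma zorn_sets (T : Type) (Pr : (T -> Prop) -> Prop) :
  (forall F : (T -> Prop) -> Prop, (forall X, F X -> Pr X) ->
     (forall X Y, F X -> F Y -> (forall t, X t -> Y t) \/ (forall t, Y t -> X t)) ->
     Pr (fun t => exists X, F X /\ X t)) ->
  exists A, Pr A /\ forall B, (forall t, A t -> B t) -> Pr B -> forall t, B t -> A t.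
Proof.
  intros H.
  destruct (classical_sets.Zorn_bigcup (T:=T) (P:=Pr)) as [A [PA HA]].
  - intros F FP Ftot.
    assert (E : classical_sets.bigcup F (fun X => X) = (fun t => exists X, F X /\ X t)).
    { unfold classical_sets.bigcup. apply FunctionalExtensionality.functional_extensionality.
      intro t. apply PropExtensionality.propositional_extensionality. simpl. split.
      - intros [X FX Xt]. eauto.
      - intros [X [FX Xt]]. econstructor; eauto. }
    rewrite E. apply H.
    + intros X FX. apply FP. exact FX.
    + intros X Y FX FY. destruct (Ftot X Y FX FY) as [h|h]; [left|right]; exact h.
  - exists A. split; [exact PA|]. intros B AB PB t Bt.
    apply NNPP. intro nA. apply (HA B); [|exact PB].
    split; [exact AB|]. intro BA. apply nA. apply BA. exact Bt.
Qed.

Section Main.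
Variables Fsym Psym : Type.
Variable HF : inhabited Fsym.

Notation term := (term Fsym).
Notation constraint := (constraint Fsym Psym).
Notation structure := (structure Fsym Psym).

Fixpoint term_ind' (Pt : term -> Prop) (HV : forall x, Pt (Var x))
  (HFn : forall f ts, Forall Pt ts -> Pt (Fn f ts)) (t : term) : Pt t :=
  match t with
  | Var x => HV x
  | Fn f ts => HFn f ts ((fix go (l : list term) : Forall Pt l :=
       match l with [] => Forall_nil _ | u :: l' => Forall_cons _ (term_ind' Pt HV HFn u) (go l') end) ts)
  end.

Inductive tree : Type := Node : Fsym -> list tree -> tree.

Fixpoint tsize (t : tree) : nat :=
  match t with Node _ l => S (list_sum (map tsize l)) end.

Lemma tsize_in u f l : In u l -> tsize u < tsize (Node f l).
Proof.
  simpl. induction l as [|a l IH]; simpl; [tauto|].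
  intros [->|H]; [lia|]. specialize (IH H). lia.
Qed.

Definition HM (I : Psym * list tree -> Prop) : structure :=
  {| dom := tree; ifun := Node; ipred := fun p l => I (p, l) |}.

Lemma eval_sub I (v : var -> tree) x : forall t : term, In x (tvars t) ->
  t = Var x \/ tsize (v x) < tsize (eval (HM I) v t).
Proof.
  apply (term_ind' (fun t => In x (tvars t) -> t = Var x \/ tsize (v x) < tsize (eval (HM I) v t))).
  - intros y [->|[]]. left; reflexivity.
  - intros f ts IH Hin. right. simpl in Hin |- *.
    apply in_flat_map in Hin as [t' [Ht' Hx]].
    rewrite Forall_forall in IH. destruct (IH t' Ht' Hx) as [->|Hlt].
    + apply (tsize_in (v x) f (map (eval (HM I) v) ts)).
      change (v x) with (eval (HM I) v (Var x)). apply in_map. exact Ht'.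
    + pose proof (tsize_in (eval (HM I) v t') f (map (eval (HM I) v) ts) (in_map _ _ _ Ht')). simpl in *. lia.
Qed.

Lemma HM_CT I : CT_model (HM I).
Proof.
  split.
  - intros f g l1 l2 H. simpl in H. inversion H. auto.
  - intros t x v Hin Hne Heq. destruct (eval_sub I v x t Hin) as [E|Hlt]; [congruence|].
    rewrite Heq in Hlt. lia.
Qed.

Fixpoint tree_ind' (Pt : tree -> Prop)
  (HN : forall f l, Forall Pt l -> Pt (Node f l)) (t : tree) : Pt t :=
  match t with
  | Node f l => HN f l ((fix go (l : list tree) : Forall Pt l :=
       match l with [] => Forall_nil _ | u :: l' => Forall_cons _ (tree_ind' Pt HN u) (go l') end) l)
  end.

Fixpoint rt (a : tree) : term := match a with Node f l => Fn f (map rt l) end.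

Fixpoint hom (M : structure) (a : tree) : dom M :=
  match a with Node f l => ifun M f (map (hom M) l) end.

Lemma tvars_rt a : tvars (rt a) = [].
Proof.
  induction a using tree_ind'. simpl. induction l as [|b l IH]; simpl; [reflexivity|].
  inversion H; subst. rewrite H2. simpl. apply IH. assumption.
Qed.

Lemma eval_ext (M : structure) (v w : var -> dom M) (t : term) :
  (forall x, In x (tvars t) -> v x = w x) -> eval M v t = eval M w t.
Proof.
  revert t. apply (term_ind' (fun t => (forall x, In x (tvars t) -> v x = w x) -> eval M v t = eval M w t)).
  - intros x H. simpl. apply H. simpl. auto.
  - intros f ts IH H. simpl. f_equal. induction ts as [|t ts IHts]; simpl; [reflexivity|].
    inversion IH as [|? ? Ht Hts]; subst. f_equal.
    + apply Ht. intros x Hx. apply H. simpl. apply in_or_app. auto.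
    + apply IHts; [assumption|]. intros x Hx. apply H. simpl. apply in_or_app. auto.
Qed.

Lemma eval_closed (M : structure) (v w : var -> dom M) (t : term) : tvars t = [] -> eval M v t = eval M w t.
Proof. intros H. apply eval_ext. rewrite H. simpl. tauto. Qed.

Lemma eval_rt (M : structure) (v : var -> dom M) a : eval M v (rt a) = hom M a.
Proof.
  induction a using tree_ind'. simpl. f_equal. rewrite map_map.
  apply map_ext_in. intros b Hb. rewrite Forall_forall in H. apply H. exact Hb.
Qed.

Lemma hom_HM I a : hom (HM I) a = a.
Proof.
  induction a using tree_ind'. simpl. f_equal.
  induction l as [|b l IH]; simpl; [reflexivity|]. inversion H; subst. f_equal; auto.
Qed.

Lemma eval_rt_H I (v : var -> tree) a : eval (HM I) v (rt a) = a.
Proof. rewrite eval_rt. apply hom_HM. Qed.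

Lemma eval_hom (M : structure) I (w : var -> dom M) (u : var -> tree) (t : term) :
  (forall x, In x (tvars t) -> w x = hom M (u x)) -> eval M w t = hom M (eval (HM I) u t).
Proof.
  revert t. apply (term_ind' (fun t => (forall x, In x (tvars t) -> w x = hom M (u x)) -> eval M w t = hom M (eval (HM I) u t))).
  - intros x H. simpl. apply H. simpl. auto.
  - intros f ts IH H. simpl. f_equal. induction ts as [|t ts IHts]; simpl; [reflexivity|].
    inversion IH as [|? ? Ht Hts]; subst. f_equal.
    + apply Ht. intros x Hx. apply H. simpl. apply in_or_app. auto.
    + apply IHts; [assumption|]. intros x Hx. apply H. simpl. apply in_or_app. auto.
Qed.

Lemma hom_inj (M : structure) : CT_model M -> forall a b, hom M a = hom M b -> a = b.
Proof.
  intros [Hi _] a. induction a using tree_ind'. intros [g l2] E. simpl in E.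
  apply Hi in E as [-> E]. f_equal. revert l2 E. induction l as [|x l IH]; intros [|y l2] E; simpl in E; try discriminate; [reflexivity|].
  inversion E. inversion H; subst. f_equal; auto.
Qed.

Definition A := (Psym * list tree)%type.
Definition ratom (a : A) : constraint := CUser (fst a) (map rt (snd a)).

Lemma svars_app (a b : list constraint) : svars (a ++ b) = svars a ++ svars b.
Proof. unfold svars. apply flat_map_app. Qed.

Lemma user_app (a b : list constraint) : user (a ++ b) = user a ++ user b.
Proof. unfold user. apply filter_app. Qed.

Lemma holds_b_app (M : structure) v (a b : list constraint) : holds_b M v (a ++ b) <-> holds_b M v a /\ holds_b M v b.
Proof. unfold holds_b. apply Forall_app. Qed.

Lemma svars_ratoms l : svars (map ratom l) = [].
Proof.
  induction l as [|a l IH]; [reflexivity|]. unfold svars in *. simpl. rewrite IH, app_nil_r.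
  unfold ratom. simpl. induction (snd a) as [|b s IHs]; simpl; [reflexivity|]. rewrite tvars_rt. exact IHs.
Qed.

Lemma user_ratoms l : user (map ratom l) = map ratom l.
Proof. induction l as [|a l IH]; simpl; [reflexivity|]. f_equal. exact IH. Qed.

Lemma holds_ratoms (M : structure) v l : holds_b M v (map ratom l).
Proof. unfold holds_b. apply Forall_forall. intros c Hc. apply in_map_iff in Hc as [a [<- _]]. exact I. Qed.

Lemma ceq_ratoms (M : structure) v w l : Forall2 (ceq M v w) (map ratom l) (map ratom l).
Proof.
  induction l as [|a l IH]; simpl; constructor; [|exact IH].
  simpl. split; [reflexivity|]. rewrite !map_map. apply map_ext. intros b. apply eval_closed, tvars_rt.
Qed.

Lemma ceq_refl_user (M : structure) v (S : list constraint) : Forall2 (ceq M v v) (user S) (user S).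
Proof.
  induction S as [|c S IH]; simpl; [constructor|].
  destruct c; simpl; auto. constructor; [|exact IH]. simpl. auto.
Qed.

Lemma equiv_refl (S : list constraint) : state_equiv S S.
Proof.
  assert (D : equiv_dir S S).
  { intros M HM v Hv. exists v. split; [auto|]. split; [|exact Hv].
    exists (user S). split; [apply Permutation_refl| apply ceq_refl_user]. }
  split; exact D.
Qed.

Lemma equiv_sym (S1 S2 : list constraint) : state_equiv S1 S2 -> state_equiv S2 S1.
Proof. intros [a b]; split; assumption. Qed.

Lemma ueq_app (M : structure) v w l1 l2 r : ueq M v w l1 l2 -> ueq M v w (l1 ++ map ratom r) (l2 ++ map ratom r).
Proof.
  intros [l2' [Hp Hf]]. exists (l2' ++ map ratom r). split.
  - apply Permutation_app_tail. exact Hp.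
  - apply Forall2_app; [exact Hf|apply ceq_ratoms].
Qed.

Lemma equiv_dir_app S1 S2 r : equiv_dir S1 S2 -> equiv_dir (S1 ++ map ratom r) (S2 ++ map ratom r).
Proof.
  intros H M HM v Hv. apply holds_b_app in Hv as [Hv _].
  destruct (H M HM v Hv) as [v' [Hl [Hu Hh]]]. exists v'. split; [exact Hl|]. split.
  - rewrite !user_app, user_ratoms. apply ueq_app. exact Hu.
  - apply holds_b_app. split; [exact Hh|apply holds_ratoms].
Qed.

Lemma equiv_app S1 S2 r : state_equiv S1 S2 -> state_equiv (S1 ++ map ratom r) (S2 ++ map ratom r).
Proof. intros [a b]. split; apply equiv_dir_app; assumption. Qed.

Notation program := (program Fsym Psym).

Lemma raw_step_app (P : program) R1 R2 r : raw_step P R1 R2 ->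
  raw_step P (R1 ++ map ratom r) (R2 ++ map ratom r) \/ state_equiv (R1 ++ map ratom r) (R2 ++ map ratom r).
Proof.
  intros [ru [C [S [th [Hin [E [Hst [Hhv [Hloc [Hinj [Hueq [Hsat Hk]]]]]]]]]]]]. subst R1.
  assert (Hst' : is_state (C ++ S ++ map ratom r)).
  { intros x Hx. rewrite app_assoc, svars_app, svars_ratoms, app_nil_r in Hx. apply Hst. exact Hx. }
  assert (Hloc' : forall y, In y (local_vars ru) ->
        exists z, is_local_var z /\ th y = Var z /\ ~ In z (svars (C ++ S ++ map ratom r))).
  { intros y Hy. destruct (Hloc y Hy) as [z [Hz1 [Hz2 Hz3]]]. exists z. split; [exact Hz1|]. split; [exact Hz2|].
    rewrite app_assoc, svars_app, svars_ratoms, app_nil_r. exact Hz3. }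
  assert (Hueq' : forall M : structure, CT_model M -> forall v : var -> dom M,
        holds_b M v (S ++ map ratom r) -> ueq M v v (ssubst th (head_constraints ru)) C).
  { intros M HM v Hv. apply holds_b_app in Hv as [Hv _]. apply Hueq; assumption. }
  assert (Hsat' : forall M : structure, CT_model M -> exists v : var -> dom M, holds_b M v (C ++ S ++ map ratom r)).
  { intros M HM. destruct (Hsat M HM) as [v Hv]. exists v. rewrite app_assoc. apply holds_b_app. split; [exact Hv|apply holds_ratoms]. }
  destruct (kind ru) eqn:Ek.
  - left. rewrite <- app_assoc. exists ru, C, (S ++ map ratom r), th. rewrite Ek. subst R2.
    split; [exact Hin|]. split; [reflexivity|].
    split; [exact Hst'|]. split; [exact Hhv|]. split; [exact Hloc'|]. split; [exact Hinj|]. split; [exact Hueq'|]. split; [exact Hsat'|].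
    rewrite app_assoc. reflexivity.
  - destruct Hk as [-> Hne].
    destruct (classic (state_equiv ((C ++ S) ++ map ratom r) ((ssubst th (body ru) ++ C ++ S) ++ map ratom r))) as [Heq|Hne'].
    + right. exact Heq.
    + left. rewrite <- app_assoc. exists ru, C, (S ++ map ratom r), th. rewrite Ek.
      split; [exact Hin|]. split; [reflexivity|].
      split; [exact Hst'|]. split; [exact Hhv|]. split; [exact Hloc'|]. split; [exact Hinj|]. split; [exact Hueq'|]. split; [exact Hsat'|].
      split.
      * rewrite !app_assoc. reflexivity.
      * rewrite !app_assoc in *. exact Hne'.
Qed.

Lemma star_app (P : program) S1 S2 r : star P S1 S2 -> star P (S1 ++ map ratom r) (S2 ++ map ratom r).
Proof.
  induction 1 as [S1 S2 [He|Hs]| |].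
  - apply rt_step. left. apply equiv_app. exact He.
  - destruct Hs as [R1 [R2 [E1 [E2 Hr]]]].
    apply rt_trans with (R1 ++ map ratom r).
    { apply rt_step. left. apply equiv_app. exact E1. }
    apply rt_trans with (R2 ++ map ratom r).
    { destruct (raw_step_app P R1 R2 r Hr) as [H|H].
      - apply rt_step. right. exists (R1 ++ map ratom r), (R2 ++ map ratom r).
        split; [apply equiv_refl|]. split; [apply equiv_refl|exact H].
      - apply rt_step. left. exact H. }
    apply rt_step. left. apply equiv_sym. apply equiv_app. exact E2.
  - apply rt_refl.
  - eapply rt_trans; eassumption.
Qed.

Definition Bad (P : program) (l : list A) : Prop := joinable P (map ratom l) [CFalse].

Lemma equiv_perm (l l' : list A) : Permutation l l' -> state_equiv (map ratom l) (map ratom l').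
Proof.
  assert (D : forall l l', Permutation l l' -> equiv_dir (map ratom l) (map ratom l')).
  { intros l1 l2 Hp M HCT v Hv. exists v. split; [auto|]. split; [|apply holds_ratoms].
    rewrite !user_ratoms. exists (map ratom l1). split.
    - apply Permutation_map. apply Permutation_sym. exact Hp.
    - apply ceq_ratoms. }
  intros Hp. split; apply D; [exact Hp|apply Permutation_sym; exact Hp].
Qed.

Lemma false_app (R : list constraint) : state_equiv [CFalse] (CFalse :: R).
Proof.
  split; intros M HCT v Hv; inversion Hv; subst; simpl in *; contradiction.
Qed.

Lemma bad_app (P : program) l r : Bad P l -> Bad P (l ++ r).
Proof.
  intros [X [H1 H2]]. exists (X ++ map ratom r). split.
  - rewrite map_app. apply star_app. exact H1.
  - apply rt_trans with ([CFalse] ++ map ratom r).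
    + apply rt_step. left. apply false_app.
    + apply star_app. exact H2.
Qed.

Lemma bad_perm (P : program) l l' : Permutation l l' -> Bad P l -> Bad P l'.
Proof.
  intros Hp [X [H1 H2]]. exists X. split; [|exact H2].
  apply rt_trans with (map ratom l); [|exact H1].
  apply rt_step. left. apply equiv_perm. apply Permutation_sym. exact Hp.
Qed.

Lemma join_back (P : program) S1 S2 T : star P S1 S2 -> joinable P S2 T -> joinable P S1 T.
Proof. intros H [X [H1 H2]]. exists X. split; [eapply rt_trans; eassumption|exact H2]. Qed.

Lemma join_fwd (P : program) S1 S2 l : ground_confluent P -> S1 = map ratom l ->
  star P S1 S2 -> joinable P S1 [CFalse] -> joinable P S2 [CFalse].
Proof.
  intros GC -> H [X [H1 H2]].
  assert (Gr : ground (map ratom l)).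
  { exists (map ratom l). split; [apply svars_ratoms|apply equiv_refl]. }
  destruct (GC _ _ _ Gr H H1) as [Y [Y1 Y2]]. exists Y. split; [exact Y1|].
  eapply rt_trans; eassumption.
Qed.

Lemma holds_ground (M : structure) I (w : var -> dom M) (u : var -> tree) (c : constraint) :
  CT_model M -> cvars c = [] -> (holds_builtin M w c <-> holds_builtin (HM I) u c).
Proof.
  intros HCT Hc. destruct c; simpl; try tauto.
  simpl in Hc. apply app_eq_nil in Hc as [Ht Hs].
  rewrite (eval_hom M I w u t), (eval_hom M I w u s) by (intros x Hx; rewrite ?Ht, ?Hs in Hx; destruct Hx).
  split; [apply hom_inj; exact HCT|intros ->; reflexivity].
Qed.

Lemma holdsb_ground (M : structure) I (w : var -> dom M) (u : var -> tree) (G : list constraint) :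
  CT_model M -> svars G = [] -> (holds_b M w G <-> holds_b (HM I) u G).
Proof.
  intros HCT. induction G as [|c G IH]; intros Hs.
  - split; constructor.
  - unfold svars in Hs. simpl in Hs. apply app_eq_nil in Hs as [Hc Hs].
    unfold holds_b. rewrite !Forall_cons_iff. fold (holds_b M w G). fold (holds_b (HM I) u G).
    rewrite (holds_ground M I w u c HCT Hc), (IH Hs). tauto.
Qed.

Definition vals I (w : var -> tree) (U : list constraint) : list A :=
  flat_map (fun c => match c with CUser p ts => [(p, map (eval (HM I) w) ts)] | _ => [] end) U.

Lemma in_vals_user I w S a : In a (vals I w (user S)) <->
  exists p ts, In (CUser p ts) S /\ a = (p, map (eval (HM I) w) ts).
Proof.
  unfold vals, user. rewrite in_flat_map. split.
  - intros [c [Hc Ha]]. apply filter_In in Hc as [Hc _]. destruct c; simpl in Ha; try contradiction.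
    destruct Ha as [<-|[]]. eauto.
  - intros [p [ts [H ->]]]. exists (CUser p ts). split; [apply filter_In; auto|simpl; auto].
Qed.

Lemma ueq_vals I v w U1 U2 : ueq (HM I) v w U1 U2 -> Permutation (vals I v U1) (vals I w U2).
Proof.
  intros [l2' [Hp Hf]]. apply Permutation_trans with (vals I w l2').
  - clear Hp. induction Hf as [|c d V1 V2 Hcd Hf IH]; [constructor|].
    simpl. destruct c, d; simpl in Hcd; try contradiction. destruct Hcd as [-> E].
    rewrite E. apply Permutation_app_head. exact IH.
  - apply Permutation_flat_map. apply Permutation_sym. exact Hp.
Qed.

Lemma G_equiv_Gu I (G : list constraint) (u0 : var -> tree) :
  svars G = [] -> holds_b (HM I) u0 G -> state_equiv G (map ratom (vals I u0 (user G))).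
Proof.
  intros Hs Hh.
  assert (F : forall (M : structure) w, CT_model M -> Forall2 (ceq M w w) (user G) (map ratom (vals I u0 (user G)))
                                   /\ Forall2 (ceq M w w) (map ratom (vals I u0 (user G))) (user G)).
  { intros M w HCT. clear Hh. induction G as [|c G IH]; [split; constructor|].
    unfold svars in Hs. simpl in Hs. apply app_eq_nil in Hs as [Hc Hs]. specialize (IH Hs).
    destruct c; simpl; try exact IH.
    destruct IH as [IH1 IH2].
    assert (E : map (eval M w) args = map (eval M w) (map rt (map (eval (HM I) u0) args))).
    { rewrite !map_map. apply map_ext_in. intros t Ht. rewrite eval_rt.
      apply (eval_hom M I w u0). intros x Hx. exfalso. simpl in Hc.
      assert (In x (flat_map (@tvars Fsym) args)) by (apply in_flat_map; exists t; split; assumption). rewrite Hc in H. exact H. }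
    split; constructor; simpl; auto. }
  split.
  - intros M HCT w Hw. exists w. split; [auto|]. split; [|apply holds_ratoms].
    rewrite user_ratoms. exists (map ratom (vals I u0 (user G))). split; [apply Permutation_refl|apply F; exact HCT].
  - intros M HCT w Hw. exists w. split; [auto|]. split.
    + rewrite user_ratoms. exists (user G). split; [apply Permutation_refl|apply F; exact HCT].
    + apply (holdsb_ground M I w u0 G HCT Hs). exact Hh.
Qed.

Lemma G_false I (G : list constraint) (u0 : var -> tree) :
  svars G = [] -> ~ holds_b (HM I) u0 G -> state_equiv G [CFalse].
Proof.
  intros Hs Hn. split.
  - intros M HCT w Hw. exfalso. apply Hn. apply (holdsb_ground M I w u0 G HCT Hs). exact Hw.
  - intros M HCT w Hw. inversion Hw; subst. simpl in *. contradiction.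
Qed.

Notation rule := (rule Fsym Psym).

Definition code (x : var) : nat := match x with PV n | GV n | LV n => n end.
Definition var_eq_dec : forall x y : var, {x = y} + {x <> y}.
Proof. decide equality; apply PeanoNat.Nat.eq_dec. Defined.

Definition th (ru : rule) (v : var -> tree) (x : var) : term :=
  if in_dec var_eq_dec x (local_vars ru) then Var (LV (code x)) else rt (v x).
Definition hv I (ru : rule) (v : var -> tree) : list A :=
  map (fun a => (fst a, map (eval (HM I) v) (snd a))) (Defs.head ru).
Definition Ch (ru : rule) v : list constraint := ssubst (th ru v) (head_constraints ru).
Definition R2 (ru : rule) v : list constraint :=
  match kind ru with
  | Simplification => ssubst (th ru v) (body ru)
  | Propagation => ssubst (th ru v) (body ru) ++ Ch ru v
  end.

Lemma head_not_local (ru : rule) x : In x (head_vars ru) -> ~ In x (local_vars ru).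
Proof.
  intros Hh Hl. unfold local_vars in Hl. apply filter_In in Hl as [_ Hf].
  apply Bool.negb_true_iff in Hf.
  assert (E : existsb (fun y => match x, y with
            | PV n, PV m | GV n, GV m | LV n, LV m => Nat.eqb n m
            | _, _ => false end) (head_vars ru) = true).
  { apply existsb_exists. exists x. split; [exact Hh|]. destruct x; apply PeanoNat.Nat.eqb_refl. }
  rewrite E in Hf. discriminate.
Qed.

Lemma local_in_body (ru : rule) x : In x (local_vars ru) -> In x (svars (body ru)).
Proof. unfold local_vars. intros H. apply filter_In in H. apply H. Qed.

Lemma subst_rt I (t0 : var -> term) (v : var -> tree) (t : term) :
  (forall x, In x (tvars t) -> t0 x = rt (v x)) -> subst t0 t = rt (eval (HM I) v t).
Proof.
  revert t. apply (term_ind' (fun t => (forall x, In x (tvars t) -> t0 x = rt (v x)) -> subst t0 t = rt (eval (HM I) v t))).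
  - intros x H. simpl. apply H. simpl. auto.
  - intros f ts IH H. simpl. f_equal. rewrite map_map. induction ts as [|t ts IHts]; simpl; [reflexivity|].
    inversion IH as [|? ? Ht Hts]; subst. f_equal.
    + apply Ht. intros x Hx. apply H. simpl. apply in_or_app. auto.
    + apply IHts; [assumption|]. intros x Hx. apply H. simpl. apply in_or_app. auto.
Qed.

Lemma eval_subst (M : structure) (w : var -> dom M) (t0 : var -> term) (t : term) :
  eval M w (subst t0 t) = eval M (fun x => eval M w (t0 x)) t.
Proof.
  revert t. apply (term_ind' (fun t => eval M w (subst t0 t) = eval M (fun x => eval M w (t0 x)) t)).
  - intros x. reflexivity.
  - intros f ts IH. simpl. f_equal. rewrite map_map. induction ts as [|t ts IHts]; simpl; [reflexivity|].
    inversion IH as [|? ? Ht Hts]; subst. f_equal; auto.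
Qed.

Lemma th_nonlocal (ru : rule) v x : ~ In x (local_vars ru) -> th ru v x = rt (v x).
Proof. intros H. unfold th. destruct (in_dec var_eq_dec x (local_vars ru)); [contradiction|reflexivity]. Qed.

Lemma th_local (ru : rule) v x : In x (local_vars ru) -> th ru v x = Var (LV (code x)).
Proof. intros H. unfold th. destruct (in_dec var_eq_dec x (local_vars ru)); [reflexivity|contradiction]. Qed.

Lemma Ch_eq I (ru : rule) v : Ch ru v = map ratom (hv I ru v).
Proof.
  unfold Ch, hv, head_constraints, ssubst. rewrite !map_map. apply map_ext_in.
  intros [p ts] Ha. simpl. unfold ratom. simpl. f_equal. rewrite map_map. apply map_ext_in.
  intros t Ht. apply subst_rt. intros x Hx. apply th_nonlocal. apply head_not_local.
  unfold head_vars, svars, head_constraints. apply in_flat_map. exists (CUser p ts). split.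
  - apply in_map_iff. exists (p, ts). auto.
  - simpl. apply in_flat_map. eauto.
Qed.

Lemma raw_core (P : program) (ru : rule) v : wf_rule ru -> In ru P ->
  (kind ru = Simplification \/ ~ state_equiv (Ch ru v) (R2 ru v)) -> raw_step P (Ch ru v) (R2 ru v).
Proof.
  intros [Hne [Hhv Hbv]] Hin Hk.
  pose proof (Ch_eq (fun _ => True) ru v) as EC.
  destruct HF as [f0].
  exists ru, (Ch ru v), [], (th ru v).
  split; [exact Hin|]. split; [rewrite app_nil_r; reflexivity|].
  split. { intros x Hx. rewrite ?app_nil_r, EC, svars_ratoms in Hx. destruct Hx. }
  split. { intros x Hx. rewrite th_nonlocal by (apply head_not_local; exact Hx). rewrite tvars_rt. intros y []. }
  split. { intros y Hy. exists (LV (code y)). split; [simpl; trivial|]. split; [apply th_local; exact Hy|].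
           rewrite ?app_nil_r, EC, svars_ratoms. intros []. }
  split. { intros y1 y2 H1 H2 E. rewrite (th_local _ _ _ H1), (th_local _ _ _ H2) in E. injection E as E.
           pose proof (Hbv y1 (local_in_body _ _ H1)). pose proof (Hbv y2 (local_in_body _ _ H2)).
           destruct y1, y2; simpl in *; try contradiction; subst; reflexivity. }
  split. { intros M HCT w _. change (ueq M w w (Ch ru v) (Ch ru v)). exists (Ch ru v).
           split; [apply Permutation_refl|]. rewrite EC. apply ceq_ratoms. }
  split. { intros M HCT. exists (fun _ => ifun M f0 []). rewrite ?app_nil_r, EC. apply holds_ratoms. }
  destruct (kind ru) eqn:Ek; unfold R2; rewrite Ek.
  - rewrite app_nil_r. reflexivity.
  - split; [rewrite app_nil_r; reflexivity|]. destruct Hk as [Hk|Hk]; [discriminate|].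
    rewrite app_nil_r. unfold R2 in Hk; rewrite Ek in Hk. exact Hk.
Qed.

Lemma core_star (P : program) (ru : rule) v : wf_rule ru -> In ru P -> star P (Ch ru v) (R2 ru v).
Proof.
  intros Hw Hin. destruct (classic (state_equiv (Ch ru v) (R2 ru v))) as [E|E].
  - apply rt_step. left. exact E.
  - apply rt_step. right. exists (Ch ru v), (R2 ru v). split; [apply equiv_refl|]. split; [apply equiv_refl|].
    apply raw_core; auto.
Qed.

Lemma core_ground (P : program) (ru : rule) v : wf_rule ru -> In ru P -> range_restricted P -> ground (R2 ru v).
Proof.
  intros Hw Hin RR. pose proof (Ch_eq (fun _ => True) ru v) as EC.
  assert (GC : ground (Ch ru v)).
  { exists (Ch ru v). split; [rewrite EC; apply svars_ratoms|apply equiv_refl]. }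
  destruct (classic (state_equiv (Ch ru v) (R2 ru v))) as [E|E].
  - exists (Ch ru v). split; [rewrite EC; apply svars_ratoms|apply equiv_sym; exact E].
  - apply (RR (Ch ru v)); [exact GC|]. exists (Ch ru v), (R2 ru v). split; [apply equiv_refl|]. split; [apply equiv_refl|].
    apply raw_core; auto.
Qed.

Definition Cons (P : program) (I : A -> Prop) : Prop := forall l, Forall I l -> ~ Bad P l.
Definition Maxl (P : program) (I : A -> Prop) : Prop :=
  forall a, ~ I a -> exists l, Forall (fun b => I b \/ b = a) l /\ Bad P l.

Lemma reduce (P : program) (I : A -> Prop) a w : Forall I w -> (forall l0, Bad P (a :: l0) -> Bad P (w ++ l0)) ->
  forall l, Forall (fun b => I b \/ b = a) l -> forall k, Forall I k -> Bad P (l ++ k) -> exists l', Forall I l' /\ Bad P l'.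
Proof.
  intros Hw Hk l. induction l as [|b l IH]; intros Hl k Hkk Hb.
  - exists k. split; assumption.
  - inversion Hl as [|? ? Hb1 Hl']; subst. destruct Hb1 as [Ib| ->].
    + apply (IH Hl' (b :: k)); [constructor; assumption|].
      apply (bad_perm P ((b :: l) ++ k)); [|exact Hb]. simpl. apply Permutation_middle.
    + apply (IH Hl' (w ++ k)); [apply Forall_app; split; assumption|].
      apply (bad_perm P (w ++ l ++ k)); [apply Permutation_app_swap_app|]. apply Hk. exact Hb.
Qed.

Definition I0 : A -> Prop := fun _ => True.

Lemma ueq_nil_l (M : structure) v w l : ueq M v w [] l -> l = [].
Proof.
  intros [l2' [Hp Hf]]. inversion Hf; subst. apply Permutation_nil. apply Permutation_sym. exact Hp.
Qed.

Lemma star_inv (P : program) (Q : list constraint -> Prop) :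
  (forall X Y, Q X -> state_equiv X Y \/ step P X Y -> Q Y) -> forall X Y, star P X Y -> Q X -> Q Y.
Proof. intros H X Y Hs. induction Hs; eauto. Qed.

Lemma inv0_equiv X Y : (exists v, holds_b (HM I0) v X) /\ user X = [] -> state_equiv X Y ->
  (exists v, holds_b (HM I0) v Y) /\ user Y = [].
Proof.
  intros [[v Hv] Hu] [E _]. destruct (E (HM I0) (HM_CT I0) v Hv) as [v' [_ [Hq Hh]]].
  split; [exists v'; exact Hh|]. rewrite Hu in Hq. apply ueq_nil_l in Hq. exact Hq.
Qed.

Lemma invF_equiv X Y : (forall v, ~ holds_b (HM I0) v X) -> state_equiv X Y -> forall v, ~ holds_b (HM I0) v Y.
Proof.
  intros H [_ E] v Hv. destruct (E (HM I0) (HM_CT I0) v Hv) as [v' [_ [_ Hh]]]. exact (H v' Hh).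
Qed.

Lemma nonbad_nil (P : program) : wf_program P -> ~ Bad P [].
Proof.
  intros Hwf [X [H1 H2]]. destruct HF as [f0].
  assert (Q0 : (exists v, holds_b (HM I0) v X) /\ user X = []).
  { refine (star_inv P (fun Z => (exists v, holds_b (HM I0) v Z) /\ user Z = []) _ _ _ H1 _).
    - intros S T HS [E|St]; [eapply inv0_equiv; eassumption|].
      destruct St as [R1 [R3 [E1 [_ Hr]]]].
      pose proof (inv0_equiv S R1 HS E1) as [[v Hv] Hu].
      destruct Hr as [ru [C [S0 [t0 [Hin [ER [_ [_ [_ [_ [Hueq _]]]]]]]]]]]. subst R1.
      apply holds_b_app in Hv as [_ Hv0].
      destruct (Hueq (HM I0) (HM_CT I0) v Hv0) as [l2' [Hp Hf]].
      unfold wf_program in Hwf. rewrite Forall_forall in Hwf. destruct (Hwf ru Hin) as [Hne _].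
      unfold ssubst, head_constraints in Hf. destruct (Defs.head ru) as [|[p ts] hs]; [contradiction|].
      simpl in Hf. inversion Hf as [|? e ? ? Hce _]; subst.
      destruct e; simpl in Hce; try contradiction.
      assert (Hin' : In (CUser c args) C).
      { apply Permutation_in with (l := CUser c args :: l'); [apply Permutation_sym; exact Hp|left; reflexivity]. }
      rewrite user_app in Hu. apply app_eq_nil in Hu as [Hu _].
      assert (In (CUser c args) (user C)) by (apply filter_In; split; [exact Hin'|reflexivity]).
      rewrite Hu in H. destruct H.
    - split; [exists (fun _ => Node f0 []); constructor|reflexivity]. }
  assert (QF : forall v, ~ holds_b (HM I0) v X).
  { refine (star_inv P (fun Z => forall v, ~ holds_b (HM I0) v Z) _ _ _ H2 _).
    - intros S T HS [E|St]; [eapply invF_equiv; eassumption|].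
      destruct St as [R1 [R3 [E1 [_ Hr]]]].
      pose proof (invF_equiv S R1 HS E1) as HR1.
      destruct Hr as [ru [C [S0 [t0 [_ [ER [_ [_ [_ [_ [_ [Hsat _]]]]]]]]]]]]. subst R1.
      destruct (Hsat (HM I0) (HM_CT I0)) as [v Hv]. exfalso. exact (HR1 v Hv).
    - intros v Hv. inversion Hv; subst. simpl in *. contradiction. }
  destruct Q0 as [[v Hv] _]. exact (QF v Hv).
Qed.

Lemma forward (P : program) I (ru : rule) v : wf_program P -> In ru P -> range_restricted P ->
  Cons P I -> Maxl P I -> Forall I (hv I ru v) ->
  exists v', (forall x, ~ In x (local_vars ru) -> v' x = v x) /\ Forall (holds_c (HM I) v') (body ru).
Proof.
  intros Hwf Hin RR HC HMx Hhv. destruct HF as [f0]. set (u0 := fun _ : var => Node f0 []).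
  assert (Hw : wf_rule ru) by (unfold wf_program in Hwf; rewrite Forall_forall in Hwf; auto).
  destruct (core_ground P ru v Hw Hin RR) as [G [HsG EqG]].
  pose proof (core_star P ru v Hw Hin) as HS.
  pose proof (Ch_eq I ru v) as EC.
  assert (Hsat : holds_b (HM I) u0 G).
  { apply NNPP. intros Hn. apply (HC (hv I ru v) Hhv). exists [CFalse]. split; [|apply rt_refl].
    rewrite <- EC. apply rt_trans with (R2 ru v); [exact HS|].
    apply rt_trans with G; [apply rt_step; left; exact EqG|].
    apply rt_step; left. apply (G_false I G u0 HsG Hn). }
  destruct (proj2 EqG (HM I) (HM_CT I) u0 Hsat) as [v'' [_ [Hu Hh]]].
  set (gu := vals I u0 (user G)).
  pose proof (G_equiv_Gu I G u0 HsG Hsat) as EGu.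
  assert (Hgu : Forall I gu).
  { apply Forall_forall. intros a Ha. apply NNPP. intros Hna. destruct (HMx a Hna) as [l [Hl1 Hl2]].
    assert (Key : forall l0, Bad P (a :: l0) -> Bad P (hv I ru v ++ l0)).
    { intros l0 Hb. apply in_split in Ha as [g1 [g2 Eg]].
      assert (Hb' : Bad P (gu ++ l0)).
      { apply (bad_perm P ((a :: l0) ++ g1 ++ g2)); [|apply bad_app; exact Hb].
        rewrite Eg. simpl. rewrite <- app_assoc. simpl.
        apply Permutation_trans with (a :: g1 ++ g2 ++ l0).
        - apply perm_skip. rewrite (app_assoc g1 g2 l0). apply Permutation_app_comm.
        - apply Permutation_middle. }
      unfold Bad in *. rewrite map_app in Hb' |- *. rewrite <- EC.
      apply join_back with (R2 ru v ++ map ratom l0); [apply star_app; exact HS|].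
      apply join_back with (G ++ map ratom l0); [apply rt_step; left; apply equiv_app; exact EqG|].
      apply join_back with (map ratom gu ++ map ratom l0); [apply rt_step; left; apply equiv_app; exact EGu|].
      exact Hb'. }
    destruct (reduce P I a (hv I ru v) Hhv Key l Hl1 [] (Forall_nil _)) as [l' [Hl' Hb']].
    - rewrite app_nil_r. exact Hl2.
    - exact (HC l' Hl' Hb'). }
  exists (fun x => eval (HM I) v'' (th ru v x)). split.
  - intros x Hx. rewrite th_nonlocal by exact Hx. apply eval_rt_H.
  - apply Forall_forall. intros c Hc.
    assert (Hcs : In (csubst (th ru v) c) (R2 ru v)).
    { unfold R2. destruct (kind ru); [|apply in_or_app; left]; apply in_map; exact Hc. }
    unfold holds_b in Hh. rewrite Forall_forall in Hh. pose proof (Hh _ Hcs) as Hb.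
    destruct c as [| |t s|p ts]; simpl in *.
    + trivial.
    + exact Hb.
    + rewrite !eval_subst in Hb. exact Hb.
    + assert (Ha : In (p, map (eval (HM I) v'') (map (subst (th ru v)) ts)) (vals I v'' (user (R2 ru v)))).
      { apply in_vals_user. exists p, (map (subst (th ru v)) ts). split; [exact Hcs|reflexivity]. }
      pose proof (ueq_vals I u0 v'' _ _ Hu) as Hp.
      apply (Permutation_in _ (Permutation_sym Hp)) in Ha.
      rewrite Forall_forall in Hgu. pose proof (Hgu _ Ha) as HI.
      rewrite map_map in HI. erewrite map_ext in HI; [exact HI|]. intros t. apply eval_subst.
Qed.

Lemma backward (P : program) I (ru : rule) v v' : wf_program P -> In ru P -> kind ru = Simplification ->
  range_restricted P -> ground_confluent P -> Cons P I -> Maxl P I ->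
  (forall x, ~ In x (local_vars ru) -> v' x = v x) -> Forall (holds_c (HM I) v') (body ru) ->
  Forall I (hv I ru v).
Proof.
  intros Hwf Hin Ek RR GC HC HMx Hag Hb. destruct HF as [f0]. set (u0 := fun _ : var => Node f0 []).
  assert (Hw : wf_rule ru) by (unfold wf_program in Hwf; rewrite Forall_forall in Hwf; auto).
  destruct Hw as [Hne [Hhvars Hbv]].
  destruct (core_ground P ru v (conj Hne (conj Hhvars Hbv)) Hin RR) as [G [HsG EqG]].
  pose proof (core_star P ru v (conj Hne (conj Hhvars Hbv)) Hin) as HS.
  pose proof (Ch_eq I ru v) as EC.
  set (vR := fun z : var => match z with LV n => v' (PV n) | _ => u0 z end).
  assert (Hev : forall x, In x (svars (body ru)) -> eval (HM I) vR (th ru v x) = v' x).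
  { intros x Hx. destruct (in_dec var_eq_dec x (local_vars ru)) as [Hl|Hl].
    - rewrite th_local by exact Hl. simpl. pose proof (Hbv x Hx) as Hp. destruct x; simpl in Hp; try contradiction. reflexivity.
    - rewrite th_nonlocal by exact Hl. rewrite eval_rt_H. symmetry. apply Hag. exact Hl. }
  assert (Hterm : forall c t, In c (body ru) -> incl (tvars t) (cvars c) ->
            eval (HM I) vR (subst (th ru v) t) = eval (HM I) v' t).
  { intros c t Hc Ht. rewrite eval_subst. apply eval_ext. intros x Hx. apply Hev.
    unfold svars. apply in_flat_map. exists c. split; [exact Hc|]. apply Ht. exact Hx. }
  assert (ER : R2 ru v = ssubst (th ru v) (body ru)) by (unfold R2; rewrite Ek; reflexivity).
  assert (HR2 : holds_b (HM I) vR (R2 ru v)).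
  { rewrite ER. unfold holds_b, ssubst. apply Forall_map. apply Forall_forall. intros c Hc.
    rewrite Forall_forall in Hb. pose proof (Hb c Hc) as Hcc.
    destruct c as [| |t s|p ts]; simpl in *; auto.
    rewrite (Hterm _ t Hc), (Hterm _ s Hc); [exact Hcc| |]; intros x Hx; simpl; apply in_or_app; auto. }
  destruct (proj1 EqG (HM I) (HM_CT I) vR HR2) as [v3 [_ [Hu Hh]]].
  set (gu := vals I v3 (user G)).
  pose proof (G_equiv_Gu I G v3 HsG Hh) as EGu.
  assert (Hgu : Forall I gu).
  { apply Forall_forall. intros a Ha.
    pose proof (ueq_vals I vR v3 _ _ Hu) as Hp.
    apply (Permutation_in _ (Permutation_sym Hp)) in Ha.
    apply in_vals_user in Ha as [p [ts' [Hin' ->]]].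
    rewrite ER in Hin'. unfold ssubst in Hin'. apply in_map_iff in Hin' as [c [Ec Hc]].
    destruct c as [| | |q ts]; simpl in Ec; try discriminate. injection Ec as -> <-.
    rewrite Forall_forall in Hb. pose proof (Hb _ Hc) as Hcc. simpl in Hcc.
    rewrite map_map. erewrite map_ext_in; [exact Hcc|]. intros t Ht. apply (Hterm _ t Hc).
    intros x Hx. simpl. apply in_flat_map. eauto. }
  apply Forall_forall. intros a Ha. apply NNPP. intros Hna. destruct (HMx a Hna) as [l [Hl1 Hl2]].
  assert (Key : forall l0, Bad P (a :: l0) -> Bad P (gu ++ l0)).
  { intros l0 Hb0. apply in_split in Ha as [h1 [h2 Eh]].
    assert (Hb' : Bad P (hv I ru v ++ l0)).
    { apply (bad_perm P ((a :: l0) ++ h1 ++ h2)); [|apply bad_app; exact Hb0].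
      rewrite Eh. simpl. rewrite <- app_assoc. simpl.
      apply Permutation_trans with (a :: h1 ++ h2 ++ l0).
      - apply perm_skip. rewrite (app_assoc h1 h2 l0). apply Permutation_app_comm.
      - apply Permutation_middle. }
    unfold Bad in *. rewrite map_app in Hb' |- *. rewrite <- EC in Hb'.
    assert (J : joinable P (R2 ru v ++ map ratom l0) [CFalse]).
    { apply (join_fwd P (Ch ru v ++ map ratom l0) _ (hv I ru v ++ l0) GC).
      - rewrite map_app, EC. reflexivity.
      - apply star_app. exact HS.
      - exact Hb'. }
    apply join_back with (G ++ map ratom l0); [apply rt_step; left; apply equiv_app; apply equiv_sym; exact EGu|].
    apply join_back with (R2 ru v ++ map ratom l0); [apply rt_step; left; apply equiv_app; apply equiv_sym; exact EqG|].
    exact J. }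
  destruct (reduce P I a gu Hgu Key l Hl1 [] (Forall_nil _)) as [l' [Hl' Hb']].
  - rewrite app_nil_r. exact Hl2.
  - exact (HC l' Hl' Hb').
Qed.

Lemma head_holds_iff I (ru : rule) v :
  Forall (holds_c (HM I) v) (head_constraints ru) <-> Forall I (hv I ru v).
Proof.
  unfold head_constraints, hv. rewrite !Forall_map. reflexivity.
Qed.

Lemma main_thm (P : program) : wf_program P -> range_restricted P -> ground_confluent P -> consistent P.
Proof.
  intros Hwf RR GC.
  destruct (zorn_sets A (Cons P)) as [I [HC HMax]].
  - intros F HFc Hch l Hl.
    assert (E : l = [] \/ exists X, F X /\ Forall X l).
    { induction l as [|a l IH]; [left; reflexivity|].
      inversion Hl as [|? ? [X1 [FX1 X1a]] Hl']; subst. right.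
      destruct (IH Hl') as [->|[X2 [FX2 HX2]]].
      - exists X1. split; [exact FX1|constructor; [exact X1a|constructor]].
      - destruct (Hch X1 X2 FX1 FX2) as [S12|S21].
        + exists X2. split; [exact FX2|constructor; [apply S12; exact X1a|exact HX2]].
        + exists X1. split; [exact FX1|constructor; [exact X1a|]]. eapply Forall_impl; [|exact HX2]. exact S21. }
    destruct E as [->|[X [FX HX]]].
    + apply nonbad_nil. exact Hwf.
    + apply (HFc X FX l HX).
  - assert (Mx : Maxl P I).
    { intros a Ha. apply NNPP. intros Hn. apply Ha.
      apply (HMax (fun b => I b \/ b = a)); [intros t Ht; left; exact Ht| |right; reflexivity].
      intros l Hl Hb. apply Hn. exists l. split; assumption. }
    exists (HM I). split; [apply HM_CT|].
    apply Forall_forall. intros ru Hin v. simpl.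
    destruct (kind ru) eqn:Ek.
    + split.
      * intros Hh. apply head_holds_iff in Hh. apply (forward P I ru v Hwf Hin RR HC Mx Hh).
      * intros [v' [Hag Hb]]. apply head_holds_iff. apply (backward P I ru v v' Hwf Hin Ek RR GC HC Mx Hag Hb).
    + intros Hh. apply head_holds_iff in Hh. apply (forward P I ru v Hwf Hin RR HC Mx Hh).
Qed.

End Main.

Theorem theorem1 (Fsym Psym : Type) (HF : inhabited Fsym)
  (P : program Fsym Psym) :
  wf_program P -> range_restricted P -> ground_confluent P -> consistent P.
Proof. exact (main_thm Fsym Psym HF P). Qed.
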